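(* Let $\mathcal T$ consist of projective objects and be functorially finite in $\mathcal A$, and let $f:X\to Y$ be an epimorphism in $\mathcal A$. The following are equivalent: (1) $\overline f$ is both a strong monomorphism and a strong epimorphism in the pretriangulated category $\underline{\mathcal A}$; (2) $\ker(f)\in\mathcal T$ and, for some $\mathcal T$-preenvelope $\mu^X:X\to T^X$, $\mu^X(\ker f)$ is a direct summand of $T^X$; (3) $\ker(f)\in\mathcal T$ and there is a decomposition $f=[0\ \ f']:X=T'\oplus X'\to Y$ with $T'\in\mathcal T$ such that every morphism $h:X'\to T$ with $T\in\mathcal T$ vanishes on $\ker(f')$.
   Context: $\mathcal A$ is abelian, $\mathcal T$ a full additive subcategory closed under finite direct sums and direct summands; $\underline{\mathcal A}=\mathcal A/\langle\mathcal T\rangle$ the stable category. For $\mathcal T$ functorially finite, $\underline{\mathcal A}$ is pretriangulated: left triangles $\Omega Y\to Z\to X\xrightarrow{\overline f}Y$ with $\Omega Y=\ker p_Y$ for a $\mathcal T$-precover $p_Y$ and $Z$ the pullback of $f$ and $p_Y$; right triangles $X\xrightarrow{\overline f}Y\to W\to\Sigma X$ with $\Sigma X=\operatorname{cok}\mu^X$ for a $\mathcal T$-preenvelope $\mu^X$ and $W$ the pushout of $f$ and $\mu^X$. $\overline f$ is a strong monomorphism if there is a left triangle $\Omega Y\to0\to X\xrightarrow{\overline f}Y$, and a strong epimorphism if there is a right triangle $X\xrightarrow{\overline f}Y\to0\to\Sigma X$. *)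

(* Defs.v *)
(* abelian categories are set up from scratch (no category
   theory library is installed).  Composition is written in DIAGRAMMATIC order:
   [comp f g] is "first f, then g" (i.e. g ∘ f). *)
From HB Require Import structures.
From mathcomp Require Import all_boot all_algebra.
Set Implicit Arguments. Unset Strict Implicit. Unset Printing Implicit Defensive.
Import GRing.Theory.
Local Open Scope ring_scope.

Record PreAddCat := {
  Obj : Type;
  Arr : Obj -> Obj -> zmodType;
  idm : forall A : Obj, Arr A A;
  comp : forall A B C : Obj, Arr A B -> Arr B C -> Arr A C;
  compA : forall (A B C D : Obj) (f : Arr A B) (g : Arr B C) (h : Arr C D),
      comp (comp f g) h = comp f (comp g h);
  comp1m : forall (A B : Obj) (f : Arr A B), comp (idm A) f = f;
  compm1 : forall (A B : Obj) (f : Arr A B), comp f (idm B) = f;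
  compDl : forall (A B C : Obj) (f f' : Arr A B) (g : Arr B C),
      comp (f + f') g = comp f g + comp f' g;
  compDr : forall (A B C : Obj) (f : Arr A B) (g g' : Arr B C),
      comp f (g + g') = comp f g + comp f g'
}.

Arguments Arr : clear implicits.
Arguments idm {p} A.
Arguments comp {p A B C} f g.

Section Defs.
Variable C : PreAddCat.
Local Notation OC := (Obj C).
Local Notation HC := (Arr C).

Definition is_mono (X Y : OC) (m : HC X Y) : Prop :=
  forall (W : OC) (g h : HC W X), comp g m = comp h m -> g = h.

Definition is_epi (X Y : OC) (e : HC X Y) : Prop :=
  forall (W : OC) (g h : HC Y W), comp e g = comp e h -> g = h.

Definition is_kernel (K X Y : OC) (k : HC K X) (f : HC X Y) : Prop :=
  comp k f = 0 /\
  forall (W : OC) (g : HC W X), comp g f = 0 -> exists! u : HC W K, comp u k = g.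

Definition is_cokernel (X Y Q : OC) (c : HC Y Q) (f : HC X Y) : Prop :=
  comp f c = 0 /\
  forall (W : OC) (g : HC Y W), comp f g = 0 -> exists! u : HC Q W, comp c u = g.

Definition is_biproduct (A B P : OC) (i1 : HC A P) (i2 : HC B P)
    (p1 : HC P A) (p2 : HC P B) : Prop :=
  [/\ comp i1 p1 = idm A, comp i2 p2 = idm B, comp i1 p2 = 0, comp i2 p1 = 0
    & comp p1 i1 + comp p2 i2 = idm P].

Definition is_pullback (X T0 Y Z : OC) (f : HC X Y) (p : HC T0 Y)
    (a : HC Z X) (b : HC Z T0) : Prop :=
  comp a f = comp b p /\
  forall (W : OC) (a' : HC W X) (b' : HC W T0), comp a' f = comp b' p ->
    exists! u : HC W Z, comp u a = a' /\ comp u b = b'.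

Definition is_pushout (X Y T1 W : OC) (f : HC X Y) (m : HC X T1)
    (c : HC Y W) (d : HC T1 W) : Prop :=
  comp f c = comp m d /\
  forall (V : OC) (c' : HC Y V) (d' : HC T1 V), comp f c' = comp m d' ->
    exists! u : HC W V, comp c u = c' /\ comp d u = d'.

Definition abelian : Prop :=
  [/\ (exists Z : OC, idm Z = 0),
      (forall A B : OC, exists (P : OC) (i1 : HC A P) (i2 : HC B P)
           (p1 : HC P A) (p2 : HC P B), is_biproduct i1 i2 p1 p2),
      (forall (X Y : OC) (f : HC X Y),
           (exists (K : OC) (k : HC K X), is_kernel k f) /\
           (exists (Q : OC) (c : HC Y Q), is_cokernel c f)),
      (forall (X Y : OC) (m : HC X Y), is_mono m ->
           exists (Q : OC) (c : HC Y Q), is_kernel m c)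
    & (forall (X Y : OC) (e : HC X Y), is_epi e ->
           exists (K : OC) (k : HC K X), is_cokernel e k)].

Definition additive_closed (T : OC -> Prop) : Prop :=
  [/\ (forall Z : OC, idm Z = 0 -> T Z),
      (forall (A B P : OC) (i1 : HC A P) (i2 : HC B P) (p1 : HC P A) (p2 : HC P B),
          is_biproduct i1 i2 p1 p2 -> T A -> T B -> T P)
    & (forall (A B : OC) (s : HC A B) (r : HC B A),
          comp s r = idm A -> T B -> T A)].

Definition projective (P : OC) : Prop :=
  forall (A B : OC) (e : HC A B), is_epi e ->
    forall g : HC P B, exists h : HC P A, comp h e = g.

Definition is_precover (T : OC -> Prop) (T0 Y : OC) (p : HC T0 Y) : Prop :=
  T T0 /\ forall (T1 : OC) (g : HC T1 Y), T T1 -> exists h : HC T1 T0, comp h p = g.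

Definition is_preenvelope (T : OC -> Prop) (X T0 : OC) (m : HC X T0) : Prop :=
  T T0 /\ forall (T1 : OC) (g : HC X T1), T T1 -> exists h : HC T0 T1, comp m h = g.

Definition functorially_finite (T : OC -> Prop) : Prop :=
  forall Y : OC,
    (exists (T0 : OC) (p : HC T0 Y), is_precover T p) /\
    (exists (T0 : OC) (m : HC Y T0), is_preenvelope T m).

(* Z is isomorphic to 0 in the stable category A/<T>, i.e. id_Z = 0 there,
   i.e. id_Z factors through an object of T. *)
Definition stably_zero (T : OC -> Prop) (Z : OC) : Prop :=
  exists (T0 : OC) (u : HC Z T0) (v : HC T0 Z), T T0 /\ comp u v = idm Z.

(* \overline f is a strong monomorphism: the left triangle
   ΩY -> Z -> X -> Y on \overline f (Z the pullback of f along a T-precover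
   p_Y) has Z ≅ 0 in the stable category. *)
Definition strong_mono (T : OC -> Prop) (X Y : OC) (f : HC X Y) : Prop :=
  exists (T0 : OC) (p : HC T0 Y) (Z : OC) (a : HC Z X) (b : HC Z T0),
    [/\ is_precover T p, is_pullback f p a b & stably_zero T Z].

(* \overline f is a strong epimorphism: the right triangle
   X -> Y -> W -> ΣX on \overline f (W the pushout of f along a T-preenvelope
   μ^X) has W ≅ 0 in the stable category. *)
Definition strong_epi (T : OC -> Prop) (X Y : OC) (f : HC X Y) : Prop :=
  exists (T0 : OC) (m : HC X T0) (W : OC) (c : HC Y W) (d : HC T0 W),
    [/\ is_preenvelope T m, is_pushout f m c d & stably_zero T W].

Definition ker_in (T : OC -> Prop) (X Y : OC) (f : HC X Y) : Prop :=
  exists (K : OC) (k : HC K X), is_kernel k f /\ T K.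

(* the image of g : A -> B (as the subobject ker(coker g) of B) is a direct
   summand of B *)
Definition image_is_summand (A B : OC) (g : HC A B) : Prop :=
  exists (Q : OC) (c : HC B Q) (I : OC) (m : HC I B) (r : HC B I),
    [/\ is_cokernel c g, is_kernel m c & comp m r = idm I].

Definition cond2 (T : OC -> Prop) (X Y : OC) (f : HC X Y) : Prop :=
  ker_in T f /\
  exists (TX : OC) (mu : HC X TX), is_preenvelope T mu /\
    exists (K : OC) (k : HC K X), is_kernel k f /\ image_is_summand (comp k mu).

Definition cond3 (T : OC -> Prop) (X Y : OC) (f : HC X Y) : Prop :=
  ker_in T f /\
  exists (T' X' : OC) (i1 : HC T' X) (i2 : HC X' X) (p1 : HC X T') (p2 : HC X X')
         (f' : HC X' Y),
    [/\ is_biproduct i1 i2 p1 p2, T T', comp i1 f = 0, f' = comp i2 f &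
        exists (K' : OC) (k' : HC K' X'), is_kernel k' f' /\
          forall (T1 : OC) (h : HC X' T1), T T1 -> comp k' h = 0].

End Defs.

(* Main.v *)
Require Import Defs.
From mathcomp Require Import all_boot all_algebra.
Set Implicit Arguments. Unset Strict Implicit. Unset Printing Implicit Defensive.
Import GRing.Theory.
Local Open Scope ring_scope.
Local Notation comp := Defs.comp.
Local Notation compA := Defs.compA.
Local Notation comp1m := Defs.comp1m.
Local Notation compm1 := Defs.compm1.
Local Notation compDl := Defs.compDl.
Local Notation compDr := Defs.compDr.

Section Gen.
Variable C : PreAddCat.
Local Notation OC := (Obj C).
Local Notation HC := (Arr C).

Lemma comp0m (A B D : OC) (g : HC B D) : comp (0 : HC A B) g = 0.
Proof. apply: (addrI (comp (0 : HC A B) g)); by rewrite -compDl !addr0. Qed.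
Lemma compm0 (A B D : OC) (g : HC A B) : comp g (0 : HC B D) = 0.
Proof. apply: (addrI (comp g (0 : HC B D))); by rewrite -compDr !addr0. Qed.
Lemma compNm (A B D : OC) (f : HC A B) (g : HC B D) : comp (- f) g = - comp f g.
Proof. apply: (addrI (comp f g)); by rewrite -compDl !subrr comp0m. Qed.
Lemma compmN (A B D : OC) (f : HC A B) (g : HC B D) : comp f (- g) = - comp f g.
Proof. apply: (addrI (comp f g)); by rewrite -compDr !subrr compm0. Qed.
Lemma compBm (A B D : OC) (f f' : HC A B) (g : HC B D) : comp (f - f') g = comp f g - comp f' g.
Proof. by rewrite compDl compNm. Qed.
Lemma compmB (A B D : OC) (f : HC A B) (g g' : HC B D) : comp f (g - g') = comp f g - comp f g'.
Proof. by rewrite compDr compmN. Qed.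

Lemma kernel_mono (K X Y : OC) (k : HC K X) (f : HC X Y) : is_kernel k f -> is_mono k.
Proof.
case=> kf0 U W g h H.
have [|u [_ Hu]] := U W (comp g k); first by rewrite compA kf0 compm0.
by rewrite -(Hu g erefl) (Hu h (esym H)).
Qed.

Lemma cokernel_epi (X Y Q : OC) (c : HC Y Q) (f : HC X Y) : is_cokernel c f -> is_epi c.
Proof.
case=> fc0 U W g h H.
have [|u [_ Hu]] := U W (comp c g); first by rewrite -compA fc0 comp0m.
by rewrite -(Hu g erefl) (Hu h (esym H)).
Qed.

Lemma kernel_fact (K X Y W : OC) (k : HC K X) (f : HC X Y) (g : HC W X) :
  is_kernel k f -> comp g f = 0 -> exists u, comp u k = g.
Proof. by case=> _ U /U [u [Hu _]]; exists u. Qed.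

Lemma coker_fact (X Y Q W : OC) (c : HC Y Q) (f : HC X Y) (g : HC Y W) :
  is_cokernel c f -> comp f g = 0 -> exists u, comp c u = g.
Proof. by case=> _ U /U [u [Hu _]]; exists u. Qed.

Lemma mono_comp (A B D : OC) (a : HC A B) (b : HC B D) :
  is_mono a -> is_mono b -> is_mono (comp a b).
Proof. move=> ma mb W g h; rewrite -!compA => /mb; exact: ma. Qed.

Lemma epi_eq0 (A B : OC) (e : HC A B) : (forall W (g : HC B W), comp e g = 0 -> g = 0) -> is_epi e.
Proof. move=> H W g h E; apply/eqP; rewrite -subr_eq0; apply/eqP/H; by rewrite compmB E subrr. Qed.

Lemma mono_eq (A B : OC) (m : HC A B) (g h : HC A A) : is_mono m -> comp g m = comp h m -> g = h.
Proof. by move=> mm /mm. Qed.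

Lemma summand_T (T : OC -> Prop) (A B : OC) (s : HC A B) (r : HC B A) :
  additive_closed T -> comp s r = idm A -> T B -> T A.
Proof. by case=> _ _ H; apply: H. Qed.

Lemma sz_T (T : OC -> Prop) (Z : OC) : additive_closed T -> stably_zero T Z -> T Z.
Proof. by move=> Ha [T0 [u [v [TT0 H]]]]; apply: summand_T Ha H TT0. Qed.

Lemma kernel_T (T : OC -> Prop) (K1 K X Y : OC) (k1 : HC K1 X) (k : HC K X) (f : HC X Y) :
  additive_closed T -> is_kernel k1 f -> T K1 -> is_kernel k f -> T K.
Proof.
move=> Ha Hk1 TK1 Hk.
have [u Hu] := kernel_fact (g := k) Hk1 (proj1 Hk).
have [v Hv] := kernel_fact (g := k1) Hk (proj1 Hk1).
apply: (summand_T (s := u) (r := v)) Ha _ TK1.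
apply: (kernel_mono Hk); by rewrite compA Hv Hu comp1m.
Qed.

Hypothesis Hab : abelian C.

Lemma ab_ker (X Y : OC) (f : HC X Y) : exists (K : OC) (k : HC K X), is_kernel k f.
Proof. by case: Hab => _ _ H _ _; case: (H X Y f). Qed.
Lemma ab_coker (X Y : OC) (f : HC X Y) : exists (Q : OC) (c : HC Y Q), is_cokernel c f.
Proof. by case: Hab => _ _ H _ _; case: (H X Y f). Qed.
Lemma ab_bip (A B : OC) : exists (P : OC) (i1 : HC A P) (i2 : HC B P)
           (p1 : HC P A) (p2 : HC P B), is_biproduct i1 i2 p1 p2.
Proof. by case: Hab => _ H _ _ _; apply: H. Qed.

Lemma epi_factor (X Y K W : OC) (f : HC X Y) (k : HC K X) (g : HC X W) :
  is_epi f -> is_kernel k f -> comp k g = 0 -> exists c, comp f c = g.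
Proof.
move=> Hf Hk kg0.
case: Hab => _ _ _ _ /(_ X Y f Hf) [K0 [k0 Hc]].
have [w Hw] := kernel_fact Hk (proj1 Hc).
apply: coker_fact Hc _; by rewrite -Hw compA kg0 compm0.
Qed.

Lemma image_epi (A B Q I : OC) (g : HC A B) (c : HC B Q) (mm : HC I B) (e : HC A I) :
  is_cokernel c g -> is_kernel mm c -> comp e mm = g -> is_epi e.
Proof.
move=> Hc Hmm Heg; apply: epi_eq0 => W g0 eg0.
have [K2 [k2 Hk2]] := ab_ker g0.
have [e' He'] := kernel_fact Hk2 eg0.
have mk2m : is_mono (comp k2 mm) by apply: mono_comp; [exact: kernel_mono Hk2|exact: kernel_mono Hmm].
case: Hab => _ _ _ /(_ _ _ _ mk2m) [Q2 [c2 Hc2]] _.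
have [w Hw] : exists w, comp c w = c2.
  apply: coker_fact Hc _; by rewrite -Heg -He' [comp (comp e' k2) mm]compA compA (proj1 Hc2) compm0.
have [t Ht] : exists t, comp t (comp k2 mm) = mm.
  apply: kernel_fact Hc2 _; by rewrite -Hw -compA (proj1 Hmm) comp0m.
have tk : comp t k2 = idm I.
  apply: (kernel_mono Hmm); by rewrite compA Ht comp1m.
by rewrite -[g0]comp1m -tk compA (proj1 Hk2) compm0.
Qed.

Lemma split_bip (A B : OC) (s : HC A B) (r : HC B A) : comp s r = idm A ->
  exists (X' : OC) (i2 : HC X' B) (p2 : HC B X'), is_biproduct s i2 r p2.
Proof.
move=> sr.
have [X' [i2 Hi2]] := ab_ker r.
have [p2 Hp2] : exists p2, comp p2 i2 = idm B - comp r s.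
  apply: kernel_fact Hi2 _; by rewrite compBm comp1m compA sr compm1 subrr.
have mi2 := kernel_mono Hi2.
exists X', i2, p2; split => //.
- apply: mi2; by rewrite compA Hp2 compmB compm1 -compA (proj1 Hi2) comp0m subr0 comp1m.
- apply: mi2; by rewrite compA Hp2 comp0m compmB compm1 -compA sr comp1m subrr.
- exact: proj1 Hi2.
- by rewrite Hp2 addrC subrK.
Qed.


Variable T : OC -> Prop.
Hypothesis Hadd : additive_closed T.
Hypothesis Hproj : forall P : OC, T P -> projective P.
Hypothesis Hff : functorially_finite T.
Variables (X Y : OC) (f : HC X Y).
Hypothesis Hf : is_epi f.

Lemma partA : strong_mono T f /\ strong_epi T f -> cond2 T f.
Proof.
case=> [[T0 [p [Z [a [b [[TT0 Pp] [Hpb1 Hpb2] sz]]]]]]].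
move=> [TX [m [W [c [d [[TTX Pm] [Hpo1 Hpo2] szW]]]]]].
have TZ := sz_T Hadd sz.
have TW := sz_T Hadd szW.
have [K [k Hk]] := ab_ker f.
have [q Hq] := Hproj TT0 Hf p.
have [|j [[ja jb] _]] := Hpb2 K k 0; first by rewrite (proj1 Hk) comp0m.
have [rho Hrho] : exists rho, comp rho k = a - comp b q.
  apply: kernel_fact Hk _; by rewrite compBm Hpb1 compA Hq subrr.
have TK : T K.
  apply: (summand_T (s := j) (r := rho)) Hadd _ TZ.
  apply: (kernel_mono Hk); by rewrite compA Hrho compmB ja -compA jb comp0m subr0 comp1m.
split; first by exists K, k.
exists TX, m; split; first by [].
exists K, k; split; first by [].
have Hd : is_cokernel d (comp k m).
  split; first by rewrite compA -Hpo1 -compA (proj1 Hk) comp0m.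
  move=> V g H.
  have [|c' Hc'] := epi_factor Hf Hk (g := comp m g); first by rewrite -compA.
  have [|u [[cu du] uu]] := Hpo2 V c' g; first by [].
  exists u; split; first by [].
  move=> u' du'; apply: uu; split => //.
  apply: Hf; by rewrite -compA Hpo1 compA du' Hc'.
have [I [mm Hmm]] := ab_ker d.
have [sig Hsig] := Hproj TW (cokernel_epi Hd) (idm W).
have [r Hr] : exists r, comp r mm = idm TX - comp d sig.
  apply: kernel_fact Hmm _; by rewrite compBm comp1m compA Hsig compm1 subrr.
exists W, d, I, mm, r; split => //.
apply: (kernel_mono Hmm); by rewrite compA Hr compmB compm1 -compA (proj1 Hmm) comp0m subr0 comp1m.
Qed.

Lemma partB : cond2 T f -> strong_mono T f /\ strong_epi T f.
Proof.
case=> [[K1 [k1 [Hk1 TK1]]] [TX [mu [[TTX Pmu] [K [k [Hk [Q [c [I [mm [r [Hc Hmm Hmr]]]]]]]]]]]]].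
split.
- have [[T0 [p [TT0 Pp]]] _] := Hff Y.
  have [q Hq] := Hproj TT0 Hf p.
  have [Z [j1 [j2 [pr1 [pr2 Hbip]]]]] := ab_bip K1 T0.
  case: (Hbip) => j11 j22 j12 j21 jsum.
  have TZ : T Z by case: Hadd => _ H _; apply: H Hbip TK1 TT0.
  exists T0, p, Z, (comp pr1 k1 + comp pr2 q), pr2; split => //.
  + split; first by rewrite compDl !compA (proj1 Hk1) compm0 add0r Hq.
    move=> W a' b' H.
    have [v Hv] : exists v, comp v k1 = a' - comp b' q.
      apply: kernel_fact Hk1 _; by rewrite compBm compA Hq H subrr.
    exists (comp v j1 + comp b' j2); split.
    * rewrite !compDr !compDl !compA -![comp j1 (comp _ _)]compA -![comp j2 (comp _ _)]compA.
      rewrite j11 j12 j21 j22 !comp1m !comp0m !compm0 addr0 add0r Hv subrK; split => //.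
      by rewrite add0r compm1.
    * move=> u' [Hu1 Hu2].
      have Hv' : comp u' pr1 = v.
        apply: (kernel_mono Hk1); rewrite Hv -Hu1 -Hu2 compDr !compA addrK //.
      by rewrite -[u']compm1 -jsum compDr -!compA Hv' Hu2.
  + by exists Z, (idm Z), (idm Z); rewrite comp1m.
- have [cW HcW] : exists cW, comp f cW = comp mu c.
    apply: epi_factor Hf Hk _; by rewrite -compA (proj1 Hc).
  exists TX, mu, Q, cW, c; split => //.
  + split => // V c' d' H.
    have [|u [cu uu]] := (proj2 Hc) V d'; first by rewrite compA -H -compA (proj1 Hk) comp0m.
    exists u; split.
    * split => //; apply: Hf; by rewrite -compA HcW compA cu.
    * by move=> u' [_ H2]; apply: uu.
  + have [t Ht] : exists t, comp t mm = comp k mu by apply: kernel_fact Hmm (proj1 Hc).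
    have [sig Hsig] : exists sig, comp c sig = idm TX - comp r mm.
      apply: coker_fact Hc _.
      by rewrite compmB compm1 -Ht compA -[comp mm (comp r mm)]compA Hmr comp1m subrr.
    exists TX, sig, c; split => //.
    apply: (cokernel_epi Hc); by rewrite -compA Hsig compBm comp1m compA (proj1 Hmm) compm0 subr0 compm1.
Qed.

Lemma partC : cond2 T f -> cond3 T f.
Proof.
case=> [[K1 [k1 [Hk1 TK1]]] [TX [mu [[TTX Pmu] [K [k [Hk [Q [c [I [mm [r [Hc Hmm Hmr]]]]]]]]]]]]].
split; first by exists K1, k1.
have [t Ht] : exists t, comp t mm = comp k mu by apply: kernel_fact Hmm (proj1 Hc).
have te : is_epi t := image_epi Hc Hmm Ht.
have TI : T I := summand_T Hadd Hmr TTX.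
have [s Hs] := Hproj TI te (idm I).
have Ht' : comp (comp k mu) r = t by rewrite -Ht compA Hmr compm1.
have sr : comp (comp s k) (comp mu r) = idm I.
  by rewrite compA -[comp k (comp mu r)]compA Ht' Hs.
have [X' [i2 [p2 Hbip]]] := split_bip sr.
case: (Hbip) => i11 i22 i12 i21 isum.
have [K' [k' Hk']] := ab_ker (comp i2 f).
exists I, X', (comp s k), i2, (comp mu r), p2, (comp i2 f); split => //.
  by rewrite compA (proj1 Hk) compm0.
exists K', k'; split => // T1 h TT1.
have [g Hg] := Pmu T1 (comp p2 h) TT1.
have [u Hu] : exists u, comp u k = comp k' i2.
  apply: kernel_fact Hk _; by rewrite compA (proj1 Hk').
have ut : comp u t = 0.
  by rewrite -Ht' -!compA Hu !compA i21 compm0.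
rewrite -[h]comp1m -i22 !compA -Hg -!compA -Hu !compA -[comp k (comp mu g)]compA -Ht.
by rewrite -!compA ut !comp0m.
Qed.

Lemma partD : cond3 T f -> cond2 T f.
Proof.
case=> [[K1 [k1 [Hk1 TK1]]] [T' [X' [i1 [i2 [p1 [p2 [f' [Hbip TT' Hi1f Hf' [K' [k' [Hk' Hvan]]]]]]]]]]]].
case: (Hbip) => i11 i22 i12 i21 isum.
split; first by exists K1, k1.
have [_ [TX [mu [TTX Pmu]]]] := Hff X.
exists TX, mu; split => //.
exists K1, k1; split => //.
have [Q [c Hc]] := ab_coker (comp k1 mu).
have [I [mm Hmm]] := ab_ker c.
have [t Ht] : exists t, comp t mm = comp k1 mu by apply: kernel_fact Hmm (proj1 Hc).
have te : is_epi t := image_epi Hc Hmm Ht.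
have [g Hg] := Pmu T' p1 TT'.
have [w Hw] : exists w, comp w k1 = i1 by apply: kernel_fact Hk1 Hi1f.
have [j Hj] : exists j, comp j mm = comp i1 mu.
  apply: kernel_fact Hmm _; by rewrite -Hw !compA -[comp k1 (comp mu c)]compA (proj1 Hc) compm0.
have [v Hv] : exists v, comp v k' = comp k1 p2.
  apply: kernel_fact Hk' _.
  have -> : comp (comp k1 p2) f' = comp k1 (comp (comp p2 i2) f) by rewrite Hf' !compA.
  have -> : comp p2 i2 = idm X - comp p1 i1 by rewrite -isum addrAC subrr add0r.
  by rewrite compBm comp1m compA Hi1f compm0 subr0 (proj1 Hk1).
have Hz : comp mm (idm TX - comp g (comp i1 mu)) = 0.
  apply: te; rewrite compm0 -compA Ht compmB compm1 -compA [comp (comp k1 mu) g]compA Hg.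
  have E : comp k1 mu = comp (comp k1 p1) (comp i1 mu) + comp v (comp k' (comp i2 mu)).
    rewrite -[comp v (comp k' _)]compA Hv -!compA -compDl.
    by rewrite !compA -compDr isum compm1.
  by rewrite {1}E (Hvan TX) // compm0 addr0 subrr.
exists Q, c, I, mm, (comp g j); split => //.
apply: (kernel_mono Hmm); rewrite !compA Hj comp1m.
by move/eqP: Hz; rewrite compmB compm1 subr_eq0 => /eqP <-.
Qed.
End Gen.

Theorem corollary5p3 (C : PreAddCat) (T : Obj C -> Prop) :
  abelian C ->
  additive_closed T ->
  (forall P : Obj C, T P -> projective P) ->
  functorially_finite T ->
  forall (X Y : Obj C) (f : Arr C X Y), is_epi f ->
    ((strong_mono T f /\ strong_epi T f) <-> cond2 T f) /\
    (cond2 T f <-> cond3 T f).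
Proof.
move=> Hab Hadd Hproj Hff X Y f Hf.
split; split.
- exact: partA.
- exact: partB.
- exact: partC.
- exact: partD.
Qed.
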